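(* For all integers $n\geq 1$ and $1\leq k\leq n$, $$\bigl|\{e\in\mathbf{I}_n(\underline{12}0):\mathrm{zero}(e)=k\}\bigr|=c_{n,k},$$ where the numbers $c_{n,k}$ are defined by $c_{1,1}=1$, $c_{n,0}=0$ for $n\geq1$, and $c_{n,k}=c_{n-1,k-1}+k\sum_{j=k}^{n-1}c_{n-1,j}$ for $n\geq 2$ and $1\leq k\leq n$ (with $c_{n-1,j}=0$ for $j>n-1$).
   Context: An inversion sequence of length $n$ is an integer sequence $e=e_1e_2\ldots e_n$ with $0\leq e_i<i$ for all $i$; the set of these is $\mathbf{I}_n$. A sequence $e$ avoids the vincular pattern $\underline{12}0$ if there are no indices $2\leq i<j\leq n$ with $e_j<e_{i-1}<e_i$; $\mathbf{I}_n(\underline{12}0)$ is the set of $\underline{12}0$-avoiding inversion sequences of length $n$. $\mathrm{zero}(e)$ is the number of entries of $e$ equal to $0$. *)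

(* Defs.v *)
From mathcomp Require Import all_boot.
Set Implicit Arguments. Unset Strict Implicit. Unset Printing Implicit Defensive.

(* An inversion sequence of length n is encoded 0-based as e : {ffun 'I_n -> 'I_n}
   where e i stands for e_{i+1}; the condition 0 <= e_{i+1} < i+1 is e i <= i. *)
Definition inv_seq n (e : {ffun 'I_n -> 'I_n}) : bool :=
  [forall i : 'I_n, (e i <= i)%N].

(* avoids the vincular pattern 12_0 (underlined 12): no 2 <= i < j <= n
   (1-based) with e_j < e_{i-1} < e_i.  0-based: positions a = i-2, a+1 = i-1,
   c = j-1 with a+1 < c. *)
Definition avoids_120 n (e : {ffun 'I_n -> 'I_n}) : bool :=
  ~~ [exists a : 'I_n, exists b : 'I_n, exists c : 'I_n,
        [&& (b == a.+1 :> nat), (b < c)%N, (e c < e a)%N & (e a < e b)%N]].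

Definition zero n (e : {ffun 'I_n -> 'I_n}) : nat :=
  #|[set i : 'I_n | (e i == 0 :> nat)]|.

Fixpoint cnk (n k : nat) {struct n} : nat :=
  match n with
  | 0 => 0
  | 1 => (k == 1)
  | (n'.+1) as m =>
      match k with
      | 0 => 0
      | k'.+1 => cnk n' k' + k * \sum_(k <= j < n'.+1) cnk n' j
      end
  end.

(* Main.v *)
Require Import Defs.
From mathcomp Require Import all_boot zify.
Set Implicit Arguments. Unset Strict Implicit. Unset Printing Implicit Defensive.
Local Notation "t @@ j" := (nth 0 t j) (at level 10).
Definition invl (t : seq nat) := all (fun j => (t @@ j) <= j) (iota 0 (size t)).
Definition avl (t : seq nat) := all (fun a => all (fun c => ~~ (((t @@ c) < (t @@ a)) && ((t @@ a) < (t @@ a.+1)))) (iota a.+2 (size t - a.+2))) (iota 0 (size t)).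
Definition zc (t : seq nat) m := count (fun j => (t @@ j) == 0) (iota 0 m).
Definition zeros t := zc t (size t).

Lemma invlP t : reflect (forall j, (t @@ j) <= j) (invl t).
Proof.
apply: (iffP allP) => H j.
  case: (ltnP j (size t)) => hj; first by apply: H; rewrite mem_iota.
  by rewrite nth_default.
by move=> _; apply: H.
Qed.

Lemma avlP t : reflect (forall a c, a.+1 < c -> c < size t -> (t @@ a) < (t @@ a.+1) -> (t @@ a) <= (t @@ c)) (avl t).
Proof.
apply: (iffP allP) => H.
  move=> a c hac hc hasc.
  have ha : a \in iota 0 (size t) by rewrite mem_iota; lia.
  have hc' : c \in iota a.+2 (size t - a.+2) by rewrite mem_iota; lia.
  move: (allP (H a ha) c hc'); rewrite hasc andbT; lia.
move=> a _; apply/allP => c; rewrite mem_iota => /andP [h1 h2].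
apply/negP => /andP [h3 h4].
have := H a c h1 _ h4; lia.
Qed.

Definition del (t : seq nat) p := mkseq (fun j => if j < p then t @@ j else (t @@ j.+1) - 1) (size t).-1.
Definition ins (t : seq nat) p v K := mkseq (fun j => if j < p then t @@ j else if j == p then v else
   if ((t @@ j.-1) == 0) && (zc t j.-1 < K) then 0 else (t @@ j.-1).+1) (size t).+1.

Lemma zcS t m : zc t m.+1 = zc t m + ((t @@ m) == 0).
Proof. by rewrite /zc -addn1 iotaD count_cat /= addn0. Qed.

Lemma zcD t a b : zc t (a + b) = zc t a + count (fun j => (t @@ j) == 0) (iota a b).
Proof. by rewrite /zc iotaD count_cat. Qed.

Lemma zc_mono t m m' : m <= m' -> zc t m <= zc t m'.
Proof. by move=> h; rewrite -(subnKC h) zcD leq_addr. Qed.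

Lemma zc_ext t u m : (forall j, j < m -> t @@ j = u @@ j) -> zc t m = zc u m.
Proof.
move=> h; apply: eq_in_count => j; rewrite mem_iota => /andP [_ hj].
by rewrite h.
Qed.

Lemma zc_le t m : zc t m <= m.
Proof. by rewrite /zc; apply: leq_trans (count_size _ _) _; rewrite size_iota. Qed.

Lemma size_del t p : size (del t p) = (size t).-1.
Proof. by rewrite size_mkseq. Qed.

Lemma nth_del t p j : j < (size t).-1 -> del t p @@ j = if j < p then t @@ j else (t @@ j.+1) - 1.
Proof. by move=> h; rewrite nth_mkseq. Qed.

Lemma size_ins t p v K : size (ins t p v K) = (size t).+1.
Proof. by rewrite size_mkseq. Qed.

Lemma nth_ins t p v K j : j < (size t).+1 -> ins t p v K @@ j = if j < p then t @@ j else if j == p then v else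
   if ((t @@ j.-1) == 0) && (zc t j.-1 < K) then 0 else (t @@ j.-1).+1.
Proof. by move=> h; rewrite nth_mkseq. Qed.

Lemma invl_del t p : invl t -> invl (del t p).
Proof.
move=> /invlP h; apply/invlP => j.
case: (ltnP j (size (del t p))) => hj; last by rewrite nth_default.
rewrite size_del in hj; rewrite nth_del //.
case: ifP => _; first exact: h.
have := h j.+1; lia.
Qed.

Lemma invl_ins t p v K : invl t -> v <= p -> invl (ins t p v K).
Proof.
move=> /invlP h hv; apply/invlP => j.
case: (ltnP j (size (ins t p v K))) => hj; last by rewrite nth_default.
rewrite size_ins in hj; rewrite nth_ins //.
case: ltnP => hjp; first exact: h.
case: eqP => [->|hne] //.
case: ifP => _ //.
have := h j.-1; lia.
Qed.

Lemma del_ins t p v K : p <= size t -> del (ins t p v K) p = t.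
Proof.
move=> hp; apply: (@eq_from_nth _ 0); first by rewrite size_del size_ins.
rewrite size_del size_ins /= => j hj.
rewrite nth_del ?size_ins //.
case: ltnP => hjp; first by rewrite nth_ins //; [rewrite hjp | lia].
rewrite nth_ins; last by lia.
rewrite ltnNge (leq_trans hjp) //= (_ : (j.+1 == p) = false); last by apply/negbTE; lia.
case: ifP => [/andP [/eqP -> _] | _] //=.
by rewrite subn1.
Qed.

Lemma count_iotaS (a : pred nat) m n : count a (iota m.+1 n) = count (fun j => a j.+1) (iota m n).
Proof. by elim: n m => [|n IH] m //=; rewrite IH. Qed.

Lemma zc_del_aux s p d : p.+1 + d <= size s ->
  zc (del s p) (p + d) + ((s @@ p) == 0) = zc s (p.+1 + d) + count (fun m => (s @@ m) == 1) (iota p.+1 d).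
Proof.
elim: d => [|d IH] hd.
  rewrite !addn0 zcS /=; congr (_ + _).
  by apply: zc_ext => m hm; rewrite nth_del ?hm //; lia.
rewrite addnS zcS -addnAC IH; last lia.
rewrite addnS zcS -(addn1 d) iotaD count_cat /= addn0 nth_del; last lia.
rewrite ltnNge leq_addr /= -addSn.
case: (s @@ (p.+1 + d)) => [|[|x]] /=; lia.
Qed.

Lemma zc_del s p j : p < j -> j <= size s ->
  zc (del s p) j.-1 + ((s @@ p) == 0) = zc s j + count (fun m => (s @@ m) == 1) (iota p.+1 (j - p.+1)).
Proof.
move=> h1 h2; have := @zc_del_aux s p (j - p.+1).
have -> : p + (j - p.+1) = j.-1 by lia.
have -> : p.+1 + (j - p.+1) = j by lia.
by apply.
Qed.

Definition NOBZ s p := forall a c, p < a -> a < c -> c < size s -> s @@ a = 1 -> s @@ c <> 0.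

Lemma zeros_del s p : p < size s -> zeros s <= zeros (del s p) + ((s @@ p) == 0).
Proof.
move=> hp; rewrite /zeros size_del zc_del //; lia.
Qed.

Lemma ins_del s p K : p < size s -> NOBZ s p -> K = zeros s - ((s @@ p) == 0) ->
  ins (del s p) p (s @@ p) K = s.
Proof.
move=> hp hN hK; apply: (@eq_from_nth _ 0); first by rewrite size_ins size_del; lia.
rewrite size_ins size_del => j hj.
rewrite nth_ins ?size_del //.
case: ltnP => hjp; first by rewrite nth_del //; [rewrite hjp | lia].
case: eqP => [-> //|hne].
have hjp' : p < j by lia.
have hjs : j < size s by lia.
rewrite nth_del; last lia.
rewrite ltnNge (_ : p <= j.-1) /=; last lia.
have -> : j.-1.+1 = j by lia.
have Hz := zc_del hjp' (ltnW hjs).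
have Hm := zc_mono s (leqnSn j); rewrite zcS in Hm.
have Hz2 := zc_mono s hjs.
case E: (s @@ j) => [|[|x]] /=.
-
  have hc : count (fun m => (s @@ m) == 1) (iota p.+1 (j - p.+1)) = 0.
    rewrite (eq_in_count (a2 := pred0)) ?count_pred0 // => m; rewrite mem_iota => hm.
    apply/eqP => h1; apply: (hN m j) => //; lia.
  rewrite hc addn0 in Hz.
  rewrite zcS E /= in Hz2.
  have h0 : (s @@ p == 0) <= zc s j.
    case: eqP => // hs0; have := zc_mono s (_ : p.+1 <= j); rewrite zcS hs0 /=; lia.
  rewrite ifT //; rewrite hK /zeros; lia.
-
  have hz : zeros s = zc s j.
    rewrite /zeros -(subnKC (ltnW hjs)) zcD.
    rewrite (eq_in_count (a2 := pred0)) ?count_pred0 ?addn0 // => m; rewrite mem_iota => hm.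
    case: (ltngtP m j) => hmj; [lia | | by subst m; rewrite E].
    apply/eqP => h0; apply: (hN j m) => //; lia.
  rewrite ifN //; rewrite hK -leqNgt; lia.
- by rewrite subn1.
Qed.

Lemma kept_count t K m0 d :
  count (fun j => ((t @@ j) == 0) && (zc t j < K)) (iota m0 d) + minn K (zc t m0) = minn K (zc t (m0 + d)).
Proof.
elim: d => [|d IH]; first by rewrite addn0.
rewrite -(addn1 d) iotaD count_cat /= addn0 -addnAC IH addnA addn1 zcS.
case: eqP => _ /=; lia.
Qed.

Lemma zeros_ins t p v K : p <= size t ->
  zeros (ins t p v K) = zc t p + (v == 0) + count (fun j => ((t @@ j) == 0) && (zc t j < K)) (iota p (size t - p)).
Proof.
move=> hp; rewrite /zeros size_ins.
have -> : (size t).+1 = p.+1 + (size t - p) by lia.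
rewrite zcD zcS.
rewrite (nth_ins _ _ _ (_ : p < (size t).+1)); last lia.
rewrite ltnn eqxx.
congr (_ + _ + _).
  apply: zc_ext => j hj; rewrite nth_ins ?hj //. lia.
rewrite count_iotaS; apply: eq_in_count => j; rewrite mem_iota => hj.
rewrite nth_ins; last lia.
have h1 : (j.+1 < p) = false by lia.
have h2 : (j.+1 == p) = false by lia.
rewrite h1 h2 /=.
by case: ifP.
Qed.

Lemma zeros_ins_eq t p v K : p <= size t -> zc t p <= K -> K <= zeros t ->
  zeros (ins t p v K) = K + (v == 0).
Proof.
move=> hp h1 h2; rewrite zeros_ins //.
have := kept_count t K p (size t - p).
have -> : p + (size t - p) = size t by lia.
rewrite /zeros in h2; lia.
Qed.

Lemma avl_del s p : avl s -> (p = 0 \/ (p.+1 < size s /\ s @@ p.+1 = 0)) -> avl (del s p).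
Proof.
move=> /avlP hs hp; apply/avlP => a c hac; rewrite size_del => hc.
rewrite !nth_del; try lia.
case: (ltngtP a.+1 p) => hap.
- case: hp => [hp0|[hp1 hp2]]; first lia.
  move=> hasc; have := hs a p.+1 _ hp1 hasc; rewrite hp2 => h.
  have -> : s @@ a = 0 by lia.
  by [].
- have -> : (c < p) = false by lia.
  move=> h; have h' : s @@ a.+1 < s @@ a.+2 by lia.
  have h3 : a.+2 < c.+1 by lia.
  have h4 : c.+1 < size s by lia.
  have := hs _ _ h3 h4 h'; lia.
- subst p.
  case: hp => [//|[hp1 hp2]]; rewrite hp2 //.
Qed.

Lemma g_mono t K m c : avl t ->
  let g m := if ((t @@ m) == 0) && (zc t m < K) then 0 else (t @@ m).+1 in
  g m < g m.+1 -> m.+1 < c -> c < size t -> g m <= g c.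
Proof.
move=> /avlP ht g; rewrite /g.
case: ifP => [//|hm].
case: ifP => [//|hm1] hlt hmc hc.
have h1 : t @@ m < t @@ m.+1 by lia.
have h2 := ht m c hmc hc h1.
case: ifP => [/andP [/eqP hc0 hzc]|//].
exfalso; move: hm; rewrite hc0 in h2.
have -> : t @@ m = 0 by lia.
have := zc_mono t (ltnW (ltnW hmc)); rewrite /=; lia.
Qed.

Lemma avl_ins t p v K : avl t -> ((p = 0 /\ v = 0) \/ (v = 1 /\ p < size t /\ t @@ p = 0)) -> avl (ins t p v K).
Proof.
move=> ht hp; have /avlP ht' := ht.
apply/avlP => a c hac; rewrite size_ins => hc.
rewrite !nth_ins; try lia.
case: (ltngtP a.+1 p) => hap.
- case: hp => [[hp0 _]|[_ [hp1 hp2]]]; first lia.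
  move=> hasc; have := ht' a p _ hp1 hasc; rewrite hp2 => h0.
  have -> : t @@ a = 0 by lia.
  by [].
- have -> : (c < p) = false by lia.
  have -> : (c == p) = false by lia.
  case: (ltngtP a p) => hap'; first lia.
  + have e1 : a.+1.-1 = a.-1.+1 by lia.
    rewrite e1 => hlt.
    apply: (g_mono ht hlt); lia.
  + subst a.
    case: hp => [[_ ->] //|[-> [hp1 hp2]]].
    rewrite /= hp2 /=; case: ifP => //.
- subst p.
  case: hp => [[hp0 _]|[-> [hp1 hp2]]]; first lia.
  move=> h; have -> : t @@ a = 0 by lia.
  by [].
Qed.

Definition ten (t : seq nat) p := [&& p.+1 < size t, t @@ p == 1 & t @@ p.+1 == 0].
Definition has10 t := has (ten t) (iota 0 (size t)).
Definition pos t i := find (fun m => i < zc t m.+1) (iota 0 (size t)).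
Definition classI t i := [&& 0 < pos t i, ten t (pos t i).-1 & ~~ has (ten t) (iota (pos t i) (size t - pos t i))].

Lemma find_iota_eq (a : pred nat) n p : p < n -> a p -> (forall m, m < p -> ~~ a m) -> find a (iota 0 n) = p.
Proof.
move=> hp hap hm.
have hh : has a (iota 0 n) by apply/hasP; exists p => //; rewrite mem_iota.
have hf : find a (iota 0 n) < size (iota 0 n) by rewrite -has_find.
rewrite size_iota in hf.
have := nth_find 0 hh; rewrite nth_iota // add0n => haf.
case: (ltngtP (find a (iota 0 n)) p) => h //.
  by have := hm _ h; rewrite haf.
by have := before_find 0 h; rewrite nth_iota ?hap //; lia.
Qed.

Lemma pos_eq t p i : p < size t -> t @@ p = 0 -> zc t p = i -> pos t i = p.
Proof.
move=> hp h0 hz; apply: find_iota_eq => //.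
  by rewrite zcS h0 hz /= addn1.
move=> m hm; rewrite -ltnNge -hz; exact: zc_mono.
Qed.

Lemma pos_spec t i : i < zeros t -> [/\ pos t i < size t, t @@ (pos t i) = 0 & zc t (pos t i) = i].
Proof.
move=> hi.
have hh : has (fun m => i < zc t m.+1) (iota 0 (size t)).
  have hs : 0 < size t by move: hi; rewrite /zeros; case: (size t) => //; rewrite /zc.
  apply/hasP; exists (size t).-1; first by rewrite mem_iota; lia.
  by rewrite prednK.
have hf : pos t i < size (iota 0 (size t)) by rewrite /pos -has_find.
rewrite size_iota in hf.
have := nth_find 0 hh; rewrite nth_iota // add0n -/(pos t i) => h1.
have h2 : zc t (pos t i) <= i.
  case E: (pos t i) => [|m]; first by rewrite /zc.
  have : m < pos t i by lia.
  rewrite /pos => /(before_find 0); rewrite nth_iota /=; last lia.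
  by rewrite add0n => /negbT; rewrite -leqNgt.
move: h1; rewrite zcS; case: eqP => /= h3 h1; split => //; lia.
Qed.

Lemma OZ t a c : avl t -> a < c -> c < size t -> t @@ a = 1 -> t @@ c = 0 ->
  exists q, [/\ a <= q, q < c & ten t q].
Proof.
move=> /avlP ht hac; have [d ->] : exists d, c = a + d.+1 by exists (c - a.+1); lia.
elim: d a {hac} => [|d IH] a hc ha hz.
  have e : a + 1 = a.+1 by lia.
  rewrite e in hc hz.
  exists a; split => //; first lia.
  by rewrite /ten ha hz hc.
case E: (t @@ a.+1) => [|[|x]].
- exists a; split => //; first lia.
  have hc' : a.+1 < size t by lia.
  by rewrite /ten ha E hc'.
- have hc1 : a.+1 + d.+1 < size t by lia.
  have hz1 : t @@ (a.+1 + d.+1) = 0 by rewrite addSnnS.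
  have [q [h1 h2 h3]] := IH a.+1 hc1 E hz1.
  by exists q; split => //; lia.
- have := ht a (a + d.+2) _ hc _; rewrite ha E hz; lia.
Qed.

Lemma NOBZ_of t p : avl t -> (forall q, p < q -> ~~ ten t q) -> NOBZ t p.
Proof.
move=> ht hq a c hpa hac hc ha hz.
have [q [h1 h2 h3]] := OZ ht hac hc ha hz.
by have := hq q (leq_trans hpa h1); rewrite h3.
Qed.

Lemma ins_noten t p v K q : p < q -> ~~ ten (ins t p v K) q.
Proof.
move=> hpq; apply/negP => /and3P [h1 h2 h3].
rewrite size_ins in h1.
rewrite nth_ins in h2; last lia.
rewrite nth_ins in h3; last lia.
move: h2 h3; have -> : (q < p) = false by lia.
have -> : (q == p) = false by lia.
have -> : (q.+1 < p) = false by lia.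
have -> : (q.+1 == p) = false by lia.
case: ifP => [//|hq1]; case: ifP => [/andP [/eqP ht hz]|//] /eqP [hq0] _.
move: hq1; rewrite hq0 eqxx /=.
move=> /negbT; rewrite -leqNgt => hk.
have := @zc_mono t q.-1 q.+1.-1 (leq_pred _); lia.
Qed.

Definition phi n (e : {ffun 'I_n -> 'I_n}) : seq nat := [seq (e i : nat) | i <- enum 'I_n].
Definition psi n (t : seq nat) : {ffun 'I_n -> 'I_n} := [ffun i : 'I_n => insubd i (t @@ (i : nat))].
Definition L n := map (@phi n) (filter (@inv_seq n) (enum {: {ffun 'I_n -> 'I_n}})).

Lemma size_phi n e : size (@phi n e) = n.
Proof. by rewrite size_map size_enum_ord. Qed.

Lemma nth_phi n e (i : 'I_n) : (@phi n e) @@ i = e i.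
Proof. by rewrite (nth_map i) ?size_enum_ord // nth_ord_enum. Qed.

Lemma phi_inj n : injective (@phi n).
Proof.
move=> e1 e2 h; apply/ffunP => i; apply: val_inj.
by have := congr1 (fun s => s @@ i) h; rewrite /= !nth_phi.
Qed.

Lemma phi_psi n t : size t = n -> invl t -> phi (@psi n t) = t.
Proof.
move=> hs /invlP ht; apply: (@eq_from_nth _ 0); first by rewrite size_phi.
rewrite size_phi => j hj.
have := nth_phi (psi n t) (Ordinal hj); rewrite /= => ->.
rewrite ffunE val_insubd /=; case: ifP => //; have := ht j; lia.
Qed.

Lemma inv_phi n e : @inv_seq n e = invl (phi e).
Proof.
apply/forallP/invlP => h j.
  case: (ltnP j n) => hj; last by rewrite nth_default // size_phi.
  by have := h (Ordinal hj); rewrite -(nth_phi e (Ordinal hj)).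
by rewrite -nth_phi.
Qed.

Lemma memL n t : (t \in L n) = (size t == n) && invl t.
Proof.
apply/mapP/andP => [[e] | [/eqP hs hi]].
  by rewrite mem_filter => /andP [he _] ->; rewrite size_phi -inv_phi he eqxx.
exists (psi n t); last by rewrite phi_psi.
by rewrite mem_filter mem_enum andbT inv_phi phi_psi.
Qed.

Lemma uniqL n : uniq (L n).
Proof. rewrite map_inj_uniq; [by rewrite filter_uniq ?enum_uniq | exact: phi_inj]. Qed.

Lemma avoids_phi n e : @avoids_120 n e = avl (phi e).
Proof.
apply/idP/idP.
  move=> /existsPn h; apply/avlP => a c hac; rewrite size_phi => hc hasc.
  have ha : a < n by lia.
  have hb : a.+1 < n by lia.
  have := h (Ordinal ha) => /existsPn /(_ (Ordinal hb)) /existsPn /(_ (Ordinal hc)).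
  move: hasc; rewrite -(nth_phi e (Ordinal ha)) -(nth_phi e (Ordinal hb)) -(nth_phi e (Ordinal hc)) /=.
  rewrite eqxx hac /= => h1; rewrite h1 andbT -leqNgt; exact.
move=> /avlP h; apply/existsPn => a; apply/existsPn => b; apply/existsPn => c.
apply/negP => /and4P [/eqP hb hbc hca hab].
have := h a c; rewrite size_phi -hb; move: hca hab.
rewrite -!nth_phi; have := ltn_ord c; lia.
Qed.

Lemma zero_phi n e : @zero n e = zeros (phi e).
Proof.
rewrite /zero /zeros /zc size_phi cardsE cardE /enum_mem size_filter -enumT.
rewrite -val_enum_ord count_map; apply: eq_count => i /=.
by rewrite nth_phi.
Qed.

Lemma bij_count (A B : seq (seq nat)) (P Q : pred (seq nat)) f g :
  uniq A -> uniq B ->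
  (forall x, x \in A -> P x -> f x \in B /\ Q (f x)) ->
  (forall y, y \in B -> Q y -> g y \in A /\ P (g y)) ->
  (forall x, x \in A -> P x -> g (f x) = x) ->
  (forall y, y \in B -> Q y -> f (g y) = y) ->
  count P A = count Q B.
Proof.
move=> uA uB hf hg hgf hfg; rewrite -!size_filter; apply/eqP; rewrite eqn_leq.
apply/andP; split.
  rewrite -(size_map f); apply: uniq_leq_size.
    rewrite map_inj_in_uniq ?filter_uniq // => x y.
    rewrite !mem_filter => /andP [px ax] /andP [py ay] e.
    by rewrite -(hgf x ax px) e hgf.
  move=> z /mapP [x]; rewrite mem_filter => /andP [px ax] ->.
  by have [h1 h2] := hf x ax px; rewrite mem_filter h1 h2.
rewrite -(size_map g); apply: uniq_leq_size.
  rewrite map_inj_in_uniq ?filter_uniq // => x y.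
  rewrite !mem_filter => /andP [px ax] /andP [py ay] e.
  by rewrite -(hfg x ax px) e hfg.
move=> z /mapP [x]; rewrite mem_filter => /andP [px ax] ->.
by have [h1 h2] := hg x ax px; rewrite mem_filter h1 h2.
Qed.

Definition C n k := count (fun t => avl t && (zeros t == k)) (L n).
Definition S n k := count (fun t => avl t && (k <= zeros t)) (L n).

Lemma nth0_L n t : t \in L n -> t @@ 0 = 0.
Proof. by rewrite memL => /andP [_ /invlP h]; have := h 0; lia. Qed.

Lemma no10_noten t : ~~ has10 t -> forall q, ~~ ten t q.
Proof.
move=> /hasPn h q; case: (ltnP q (size t)) => hq.
  by apply: h; rewrite mem_iota.
by rewrite /ten; apply/negP => /and3P [h1 _ _]; lia.
Qed.

Lemma class0_count n k :
  count (fun t => [&& avl t, zeros t == k.+1 & ~~ has10 t]) (L n.+1) = S n k.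
Proof.
apply: (bij_count (f := fun x => del x 0) (g := fun y => ins y 0 0 k)); rewrite ?uniqL //.
- move=> x; rewrite memL => /andP [/eqP hs hi] /and3P [ha /eqP hz hn].
  rewrite memL size_del hs eqxx invl_del //=; split => //.
  rewrite avl_del //=; last by left.
  have hx : x \in L n.+1 by rewrite memL hs eqxx hi.
  have hs0 : 0 < size x by rewrite hs.
  have := zeros_del hs0; rewrite (nth0_L hx) hz /=; lia.
- move=> y; rewrite memL => /andP [/eqP hs hi] /andP [ha hz].
  rewrite memL size_ins hs eqxx invl_ins //=; split => //.
  rewrite avl_ins //=; last by left.
  have hz0 : zc y 0 <= k by [].
  rewrite zeros_ins_eq //.
  rewrite eqxx addn1 eqxx /=.
  apply/hasPn => q _; case: q => [|q]; last exact: ins_noten.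
  by rewrite /ten nth_ins //= andbF.
- move=> x hx /and3P [ha /eqP hz hn].
  have h0 := nth0_L hx; move: hx; rewrite memL => /andP [/eqP hs hi].
  have E := @ins_del x 0 k; rewrite h0 in E; apply: E; first by rewrite hs.
    apply: NOBZ_of => // q _; exact: no10_noten.
  by rewrite hz subn1.
- by move=> y _ _; rewrite del_ins.
Qed.

Lemma classI_spec x i : classI x i ->
  [/\ 0 < pos x i, pos x i < size x, x @@ (pos x i).-1 = 1, x @@ (pos x i) = 0
    & forall q, pos x i <= q -> ~~ ten x q].
Proof.
move=> /and3P [h0 /and3P [h1 /eqP h2 /eqP h3] /hasPn h4].
have e : (pos x i).-1.+1 = pos x i by lia.
rewrite e in h1 h3; split => // q hq.
case: (ltnP q (size x)) => hqs; first by apply: h4; rewrite mem_iota; lia.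
by rewrite /ten; apply/negP => /and3P [h5 _ _]; lia.
Qed.

Lemma classI_lt x i : classI x i -> i < zeros x.
Proof.
move=> hc; have [h0 h1 _ _ _] := classI_spec hc.
rewrite ltnNge; apply/negP => hz.
move: h1; rewrite /pos hasNfind ?size_iota ?ltnn //.
apply/hasPn => m; rewrite mem_iota => /andP [_ hm].
rewrite -leqNgt; apply: leq_trans hz; exact: zc_mono.
Qed.

Lemma pos_ins y i K : i < zeros y -> 0 < i -> i < K ->
  pos (ins y (pos y i) 1 K) i = (pos y i).+1.
Proof.
move=> hi h0 hK; have [hp1 hp2 hp3] := pos_spec hi.
apply: pos_eq; first by rewrite size_ins.
  rewrite nth_ins ?ltnn; last lia.
  by rewrite ltnNge leqnSn /= (_ : (pos y i).+1 == pos y i = false) ?hp2 ?hp3 ?hK //; lia.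
rewrite zcS nth_ins ?ltnn ?eqxx /=; last lia.
rewrite addn0 -[X in _ = X]hp3; apply: zc_ext => j hj; rewrite nth_ins ?hj //; lia.
Qed.

Lemma classI_count n k i : 0 < i -> i <= k ->
  count (fun t => [&& avl t, zeros t == k.+1 & classI t i]) (L n.+1) = S n k.+1.
Proof.
move=> hi0 hik.
apply: (bij_count (f := fun x => del x (pos x i).-1) (g := fun y => ins y (pos y i) 1 k.+1)); rewrite ?uniqL //.
- move=> x; rewrite memL => /andP [/eqP hs hi] /and3P [ha /eqP hz hc].
  have [h0 h1 h2 h3 h4] := classI_spec hc.
  rewrite memL size_del hs eqxx invl_del //=; split => //.
  rewrite avl_del //=; last by right; split; rewrite prednK.
  have hp : (pos x i).-1 < size x by apply: leq_ltn_trans (leq_pred _) h1.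
  have := zeros_del hp; rewrite h2 hz /=; lia.
- move=> y; rewrite memL => /andP [/eqP hs hi] /andP [ha hz].
  have hiz : i < zeros y by apply: leq_ltn_trans hik hz.
  have [hp1 hp2 hp3] := pos_spec hiz.
  have hp0 : 0 < pos y i by case E: (pos y i) hp3 => [|m] //= h; rewrite /zc /= in h; lia.
  rewrite memL size_ins hs eqxx invl_ins //=; split => //.
  rewrite avl_ins //=; last by right.
  rewrite zeros_ins_eq //; [|exact: ltnW hp1|rewrite hp3; lia].
  rewrite addn0 eqxx /=.
  rewrite /classI pos_ins //.
  have hq1 : pos y i < (size y).+1 by apply: ltnW.
  have hq2 : (pos y i).+1 < (size y).+1 by rewrite ltnS.
  have ht : ten (ins y (pos y i) 1 k.+1) (pos y i).
    rewrite /ten size_ins hq2 (nth_ins _ _ _ hq1) (nth_ins _ _ _ hq2) ltnn eqxx ltnNge leqnSn /=.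
    rewrite (_ : ((pos y i).+1 == pos y i) = false); last by apply/negbTE; rewrite neq_ltn ltnSn orbT.
    by rewrite /= hp2 hp3 eqxx (_ : i < k.+1 = true) //; apply: leq_trans hik _.
  rewrite /= ht /=.
  apply/hasPn => q; rewrite mem_iota => /andP [hq _]; exact: ins_noten.
- move=> x hx /and3P [ha /eqP hz hc].
  have [h0 h1 h2 h3 h4] := classI_spec hc.
  have hiz := classI_lt hc.
  have [_ _ hp3] := pos_spec hiz.
  have hp : (pos x i).-1 < size x by apply: leq_ltn_trans (leq_pred _) h1.
  have ep : pos (del x (pos x i).-1) i = (pos x i).-1.
    apply: pos_eq; first by rewrite size_del; lia.
      rewrite nth_del; last lia.
      by rewrite ltnn prednK // h3.
    have e1 : zc x (pos x i).-1 = i by move: hp3; rewrite -{1}(prednK h0) zcS h2 addn0.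
    rewrite -[X in _ = X]e1; apply: zc_ext => j hj.
    by rewrite nth_del ?hj //; lia.
  rewrite ep; have E := @ins_del x (pos x i).-1 k.+1; rewrite h2 in E; apply: E => //.
    apply: NOBZ_of => // q hq; apply: h4; lia.
  by rewrite hz.
- move=> y hy /andP [ha hz].
  have hiz : i < zeros y by apply: leq_ltn_trans hik hz.
  have hik' : i < k.+1 by rewrite ltnS.
  rewrite pos_ins //=.
  by rewrite del_ins //; have [] := pos_spec hiz => /ltnW.
Qed.

Lemma sum_eq1 k j : \sum_(i < k) (i.+1 == j) = (0 < j <= k).
Proof.
elim: k => [|k IH]; first by rewrite big_ord0 andbC leqn0; case: eqP => // ->.
rewrite big_ord_recr /= IH.
move: IH; case: j => [|j] //= _.
rewrite eqSS; case: (ltngtP j k) => //= h.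
- by rewrite ltnS ltnW.
- by rewrite ltnS leqNgt h.
- by rewrite h ltnSn.
Qed.

Lemma count_partition (A : seq (seq nat)) (P a : pred (seq nat)) (b : nat -> pred (seq nat)) k :
  (forall x, x \in A -> P x -> a x + \sum_(i < k) b i x = 1) ->
  count P A = count (fun x => P x && a x) A + \sum_(i < k) count (fun x => P x && b i x) A.
Proof.
elim: A => [|x A IH] h /=.
  by rewrite big1.
rewrite IH; last by move=> y hy; apply: h; rewrite inE hy orbT.
rewrite big_split /= addnACA; congr (_ + _).
case hP: (P x) => /=.
  by rewrite h ?inE ?eqxx.
by rewrite big1.
Qed.

Lemma partition n k x : x \in L n.+1 -> avl x -> zeros x = k.+1 ->
  ~~ has10 x + \sum_(i < k) classI x i.+1 = 1.
Proof.
move=> hx ha hz.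
have h0 := nth0_L hx.
case H: (has10 x) => /=; last first.
  rewrite big1 // => i _; case hc: (classI x i.+1) => //.
  have [h1 h2 h3 h4 h5] := classI_spec hc.
  move/negbT: H => /hasPn /(_ (pos x i.+1).-1).
  rewrite mem_iota /= (leq_ltn_trans (leq_pred _) h2) => /(_ erefl).
  by move: hc => /and3P [_ -> _].
have ex : exists p, ten x p.
  by move/hasP: H => [p _ hp]; exists p.
have ub : forall p, ten x p -> p <= size x.
  by move=> p /and3P [hp _ _]; apply: ltnW; apply: ltnW.
case: (ex_maxnP ex ub) => p hp hmax.
have /and3P [hp1 /eqP hp2 /eqP hp3] := hp.
set i0 := zc x p.
have hpos : pos x i0 = p.+1.
  by apply: pos_eq => //; rewrite zcS hp2 addn0.
have hcl : forall i, classI x i = (i == i0).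
  move=> i; apply/idP/eqP => [hc|->].
    have [h1 h2 h3 h4 h5] := classI_spec hc.
    have hle : (pos x i).-1 <= p by apply: hmax; move: hc => /and3P [].
    have hlt : p < pos x i.
      rewrite ltnNge; apply/negP => hh; have := h5 p hh; rewrite hp.
      by [].
    have ep : pos x i = p.+1 by lia.
    have [_ _ hz'] := pos_spec (classI_lt hc).
    by rewrite -hz' ep zcS hp2 addn0.
  rewrite /classI hpos /= hp /=.
  apply/hasPn => q; rewrite mem_iota => /andP [hq _].
  by apply/negP => /hmax; lia.
under eq_bigr do rewrite hcl.
rewrite sum_eq1.
have hi0 : 0 < i0.
  have hp0 : 0 < p by rewrite lt0n; apply/eqP => e; move: hp2; rewrite e h0.
  have z0 : zc x 0 = 0 by [].
  have := zc_mono x hp0; rewrite zcS h0 z0 /=.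
  by rewrite /i0.
have hi1 : i0 <= k.
  have := @zc_mono x p.+2 (size x) hp1; rewrite /zeros in hz; rewrite hz !zcS hp2 hp3 /=.
  rewrite -/i0; lia.
by rewrite hi0 hi1.
Qed.

Lemma C_rec n k : C n.+1 k.+1 = S n k + k * S n k.+1.
Proof.
rewrite /C (@count_partition _ _ (fun t => ~~ has10 t) (fun i t => classI t i.+1) k).
  congr (_ + _).
    rewrite -(class0_count n k); apply: eq_count => t /=; by rewrite andbA.
  rewrite (eq_bigr (fun _ => S n k.+1)); last first.
    move=> i _; rewrite -(@classI_count n k i.+1) //; apply: eq_count => t /=; by rewrite andbA.
  by rewrite big_const_ord iter_addn_0 mulnC.
move=> x hx /andP [ha /eqP hz]; exact: (partition hx ha hz).
Qed.

Lemma S_split n k : S n k = C n k + S n k.+1.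
Proof.
rewrite /S /C; elim: (L n) => //= x l ->.
rewrite addnACA; congr (_ + _).
case: (avl x) => //=; case: (ltngtP k (zeros x)) => //= h.
all: try by rewrite ltnW.
all: try by rewrite h leqnn ltnn.
all: try by rewrite leqNgt h.
Qed.

Lemma S_big n k : S n k = \sum_(k <= j < n.+1) C n j.
Proof.
have S0 : forall j, n < j -> S n j = 0.
  move=> j hj; rewrite /S (eq_in_count (a2 := pred0)) ?count_pred0 // => t.
  rewrite memL => /andP [/eqP hs _] /=; apply/negbTE; rewrite negb_and -ltnNge.
  apply/orP; right; apply: leq_ltn_trans hj; rewrite -hs; exact: zc_le.
case: (ltnP n k) => hk.
  by rewrite S0 // big_geq.
have aux : forall d, S n k = \sum_(k <= j < k + d) C n j + S n (k + d).
  elim => [|d IH]; first by rewrite addn0 big_geq.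
  rewrite IH addnS big_nat_recr ?leq_addr //= S_split addnA.
  by [].
rewrite (aux (n.+1 - k)) (_ : k + (n.+1 - k) = n.+1); last lia.
by rewrite S0 ?addn0.
Qed.

Lemma C_0 n : C n.+1 0 = 0.
Proof.
rewrite /C (eq_in_count (a2 := pred0)) ?count_pred0 // => t ht /=.
apply/negbTE; rewrite negb_and; apply/orP; right.
have := nth0_L ht; move: ht; rewrite memL => /andP [/eqP hs _] h0.
rewrite -lt0n; have := @zc_mono t 1 (size t); rewrite hs zcS h0 /= => /(_ erefl).
rewrite /zeros hs; apply: leq_trans; by rewrite addn1.
Qed.

Lemma S_0 j : S 0 j = (j == 0).
Proof.
have hp : perm_eq (L 0) [:: [::]].
  apply: uniq_perm; rewrite ?uniqL // => t.
  rewrite memL inE size_eq0; apply/andP/eqP => [[/eqP -> _] //|->] //.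
by rewrite /S (permP hp) /= addn0; case: j.
Qed.

Lemma C_cnk n k : C n.+1 k = cnk n.+1 k.
Proof.
elim: n k => [|n IH] [|k]; rewrite ?C_0 //.
  by rewrite C_rec !S_0 muln0 addn0; case: k.
rewrite C_rec S_split IH -addnA -mulSn S_big.
have -> : cnk n.+2 k.+1 = cnk n.+1 k + k.+1 * \sum_(k.+1 <= j < n.+2) cnk n.+1 j by [].
congr (_ + _ * _); apply: eq_bigr => j _; exact: IH.
Qed.

Lemma card_C n k :
  #|[set e : {ffun 'I_n -> 'I_n} | [&& inv_seq e, avoids_120 e & zero e == k]]| = C n k.
Proof.
rewrite cardsE cardE /enum_mem size_filter /C /L count_map count_filter.
rewrite enumT; apply: eq_count => e /=.
rewrite unfold_in /= avoids_phi zero_phi.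
by case: (inv_seq e); rewrite /= ?andbT ?andbF.
Qed.

Theorem mainTheorem2 (n k : nat) :
  (1 <= n)%N -> (1 <= k <= n)%N ->
  #|[set e : {ffun 'I_n -> 'I_n} | [&& inv_seq e, avoids_120 e & zero e == k]]|
  = cnk n k.
Proof.
case: n => [//|n] _ _.
by rewrite card_C C_cnk.
Qed.
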